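(* Let $\lambda\in\mathbb{R}$, let $$J_6=\begin{pmatrix}\lambda&1&0\\0&\lambda&1\\0&0&\lambda\end{pmatrix},$$ and $h>0$ with $\lambda h+2\neq 0$. Set $$\psi=\frac{e^{\lambda h}(2-\lambda h)}{\lambda h+2},\qquad \phi=\frac{h(e^{\lambda h}+1)}{\lambda h+2},\qquad \theta=\frac{1}{e^{\lambda h}+1}.$$ Then the difference scheme $$\frac{\mathbf{x}_{k+1}-\psi\mathbf{x}_k}{\phi}=J_6\big[\theta\mathbf{x}_{k+1}+(1-\theta)\mathbf{x}_k\big]$$ is exact for the system $\mathbf{x}'=J_6\mathbf{x}$.
   Context: A one-step difference scheme with step size $h>0$ for $\mathbf{x}'=M\mathbf{x}$ is called exact if for every initial vector $\mathbf{x}_0$ the sequence $(\mathbf{x}_k)$ it generates satisfies $\mathbf{x}_k=\mathbf{x}(kh)$ for all $k\ge 0$, where $\mathbf{x}(t)$ solves $\mathbf{x}'=M\mathbf{x}$, $\mathbf{x}(0)=\mathbf{x}_0$. *)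

(* Defs.v *)
From HB Require Import structures.
From mathcomp Require Import all_boot all_order all_algebra.
From mathcomp Require Import all_classical all_reals all_analysis.
Set Implicit Arguments. Unset Strict Implicit. Unset Printing Implicit Defensive.
Import Order.TTheory GRing.Theory Num.Theory.
Import numFieldNormedType.Exports.
Local Open Scope ring_scope.

Definition J6 {R : realType} (lam : R) : 'M[R]_3 :=
  \matrix_(i < 3, j < 3)
    (if i == j then lam else if (j == i.+1 :> nat) then 1 else 0).

Definition solves_ode {R : realType} {n : nat} (M : 'M[R]_n)
  (x : R -> 'cV[R]_n) : Prop :=
  forall t : R, derivable x t 1 /\ derive1 x t = M *m x t.

(* A one-step scheme is given by its (possibly implicit) step relation
   [step xk xk1] : "x_{k+1} = xk1 is the next iterate from x_k = xk". *)
Definition exact_scheme {R : realType} {n : nat} (h : R) (M : 'M[R]_n)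
  (step : 'cV[R]_n -> 'cV[R]_n -> Prop) : Prop :=
  forall (x0 : 'cV[R]_n) (x : R -> 'cV[R]_n),
    solves_ode M x -> x 0 = x0 ->
    forall xs : nat -> 'cV[R]_n,
      xs 0%N = x0 -> (forall k, step (xs k) (xs k.+1)) ->
      forall k, xs k = x (k%:R * h).

Definition theta_scheme {R : realType} {n : nat} (psi phi theta : R)
  (M : 'M[R]_n) (xk xk1 : 'cV[R]_n) : Prop :=
  phi^-1 *: (xk1 - psi *: xk) = M *m (theta *: xk1 + (1 - theta) *: xk).

(* Main.v *)
Require Import Defs.
From HB Require Import structures.
From mathcomp Require Import all_boot all_order all_algebra.
From mathcomp Require Import all_classical all_reals all_analysis.
From mathcomp Require Import ring lra.
Import Order.TTheory GRing.Theory Num.Theory.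
Import numFieldNormedType.Exports.
Local Open Scope ring_scope.


Definition o0 : 'I_3 := @Ordinal 3 0 isT.
Definition o1 : 'I_3 := @Ordinal 3 1 isT.
Definition o2 : 'I_3 := @Ordinal 3 2 isT.

Lemma cV3_ext (R : realType) (u v : 'cV[R]_3) :
  u o0 0 = v o0 0 -> u o1 0 = v o1 0 -> u o2 0 = v o2 0 -> u = v.
Proof.
move=> H0 H1 H2; apply/matrixP => i j; rewrite (ord1 j).
case: i => [[|[|[|//]]] Hi].
- by rewrite (_ : Ordinal Hi = o0) //; apply: val_inj.
- by rewrite (_ : Ordinal Hi = o1) //; apply: val_inj.
- by rewrite (_ : Ordinal Hi = o2) //; apply: val_inj.
Qed.

Lemma J6_mul (R : realType) (lam : R) (v : 'cV[R]_3) :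
  [/\ (J6 lam *m v) o0 0 = lam * v o0 0 + v o1 0,
      (J6 lam *m v) o1 0 = lam * v o1 0 + v o2 0 &
      (J6 lam *m v) o2 0 = lam * v o2 0].
Proof.
have e0 : v (widen_ord (leqnSn 2) (widen_ord (leqnSn 1) ord_max)) 0 = v o0 0 by congr (v _ 0); apply: val_inj.
have e1 : v (widen_ord (leqnSn 2) ord_max) 0 = v o1 0 by congr (v _ 0); apply: val_inj.
have e2 : v ord_max 0 = v o2 0 by congr (v _ 0); apply: val_inj.
split; rewrite !mxE !big_ord_recr !big_ord0 /= !mxE /= ?e0 ?e1 ?e2 ?mul0r ?mul1r ?add0r ?addr0 //.
Qed.

Lemma comp_deriv (R : realType) (M : 'M[R]_3) (x : R -> 'cV[R]_3) :
  solves_ode M x -> forall (i : 'I_3) (t : R),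
  derivable (fun s => x s i 0) t 1 /\
  'D_1 (fun s => x s i 0) t = (M *m x t) i 0.
Proof.
move=> sol i t; have [d e] := sol t.
split; first by move/derivable_mxP: d; apply.
have := derive_mx d; rewrite -derive1E e => /matrixP /(_ i 0).
by rewrite !mxE => ->.
Qed.
Lemma exp_sol (R : realType) (lam : R) (f g G : R -> R) :
  (forall t : R, derivable f t 1) ->
  (forall t : R, 'D_1 f t = lam * f t + expR (lam * t) * g t) ->
  (forall t : R, is_derive t (1:R) G (g t)) ->
  forall t : R, f t = expR (lam * t) * (f 0 + G t - G 0).
Proof.
move=> df Df dG t.
pose E := fun t : R => expR ((- lam) * t).
have dE : forall s : R, is_derive s (1:R) E (- lam * E s).
  move=> s.
  have h1 := is_deriveZ (- lam) (is_derive_id s (1:R)).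
  have := @is_derive1_comp R expR ((- lam) \*: id) s _ _ (is_derive_expR _) h1.
  by move=> H; apply: is_derive_eq H _; rewrite /GRing.scale /= mulr1 mulrC.
pose h := fun s => E s * f s - G s.
have dh : forall s : R, is_derive s (1:R) h 0.
  move=> s.
  have := is_deriveB (is_deriveM (dE s) (derivableP (df s))) (dG s).
  move=> H; apply: is_derive_eq H _.
  rewrite Df /E /GRing.scale /= mulrDr [expR _ * (expR _ * _)]mulrA -expRD mulNr addNr expR0 mul1r.
  ring.
have := is_derive_0_is_cst t 0 dh.
rewrite /h /E mulr0 expR0 mul1r => H.
have -> : f t = expR (lam * t) * (expR ((- lam) * t) * f t).
  by rewrite mulrA -expRD mulNr subrr expR0 mul1r.
congr (_ * _). rewrite -[LHS](subrK (G t)) H; ring.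
Qed.

Lemma sol_formula (R : realType) (lam : R) (x : R -> 'cV[R]_3) :
  solves_ode (J6 lam) x -> forall t : R,
  [/\ x t o2 0 = expR (lam * t) * x 0 o2 0,
      x t o1 0 = expR (lam * t) * (x 0 o1 0 + t * x 0 o2 0) &
      x t o0 0 = expR (lam * t) * (x 0 o0 0 + t * x 0 o1 0 + (t * t) / 2 * x 0 o2 0)].
Proof.
move=> sol; have CD := @comp_deriv R (J6 lam) x sol.
have F2 : forall t : R, x t o2 0 = expR (lam * t) * x 0 o2 0.
  have Df : forall s : R, 'D_1 (fun s => x s o2 0) s = lam * x s o2 0 + expR (lam * s) * 0.
    move=> s; rewrite (CD o2 s).2; have [_ _ ->] := J6_mul _ lam (x s).
    by rewrite mulr0 addr0.
  move=> t.
  have := @exp_sol R lam (fun s => x s o2 0) (fun _ => 0) (cst 0)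
    (fun s => (CD o2 s).1) Df (fun s => is_derive_cst 0 s 1) t.
  by rewrite /= subr0 addr0.
have F1 : forall t : R, x t o1 0 = expR (lam * t) * (x 0 o1 0 + t * x 0 o2 0).
  have Df : forall s : R, 'D_1 (fun s => x s o1 0) s = lam * x s o1 0 + expR (lam * s) * x 0 o2 0.
    move=> s; rewrite (CD o1 s).2; have [_ -> _] := J6_mul _ lam (x s).
    by rewrite F2.
  have hG : forall s : R, is_derive s (1:R) ((x 0 o2 0) \*: id) (x 0 o2 0).
    move=> s; have H := is_deriveZ (x 0 o2 0) (is_derive_id s (1:R)); apply: is_derive_eq H _.
    by rewrite /GRing.scale /= mulr1.
  move=> t.
  have := @exp_sol R lam (fun s => x s o1 0) (fun _ => x 0 o2 0) _
    (fun s => (CD o1 s).1) Df hG t.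
  by rewrite /= /GRing.scale /= mulr0 subr0 [t * _]mulrC.
have F0 : forall t : R, x t o0 0 = expR (lam * t) * (x 0 o0 0 + t * x 0 o1 0 + (t * t) / 2 * x 0 o2 0).
  have Df : forall s : R, 'D_1 (fun s => x s o0 0) s = lam * x s o0 0 + expR (lam * s) * (x 0 o1 0 + s * x 0 o2 0).
    move=> s; rewrite (CD o0 s).2; have [-> _ _] := J6_mul _ lam (x s).
    by rewrite F1.
  have hG : forall s : R, is_derive s (1:R) ((x 0 o1 0) \*: id + (x 0 o2 0 / 2) \*: (id * id))
      (x 0 o1 0 + s * x 0 o2 0).
    move=> s.
    have H := is_deriveD (is_deriveZ (x 0 o1 0) (is_derive_id s (1:R)))
       (is_deriveZ (x 0 o2 0 / 2) (is_deriveM (is_derive_id s (1:R)) (is_derive_id s (1:R)))).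
    apply: is_derive_eq H _.
    by rewrite /GRing.scale /=; field.
  move=> t.
  have := @exp_sol R lam (fun s => x s o0 0) (fun s => x 0 o1 0 + s * x 0 o2 0) _
    (fun s => (CD o0 s).1) Df hG t.
  rewrite /= => ->; congr (_ * _); rewrite !fctE /= /GRing.scale /=. by field.
by move=> t; split.
Qed.

Lemma scheme_comp (R : realType) (lam psi phi theta : R) (u y : 'cV[R]_3) :
  theta_scheme psi phi theta (J6 lam) u y ->
  [/\ phi^-1 * (y o0 0 - psi * u o0 0) =
        lam * (theta * y o0 0 + (1 - theta) * u o0 0) + (theta * y o1 0 + (1 - theta) * u o1 0),
      phi^-1 * (y o1 0 - psi * u o1 0) =
        lam * (theta * y o1 0 + (1 - theta) * u o1 0) + (theta * y o2 0 + (1 - theta) * u o2 0) &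
      phi^-1 * (y o2 0 - psi * u o2 0) =
        lam * (theta * y o2 0 + (1 - theta) * u o2 0)].
Proof.
rewrite /theta_scheme => H.
have [A0 A1 A2] := J6_mul _ lam (theta *: y + (1 - theta) *: u).
split.
- by move/matrixP: H => /(_ o0 0); rewrite A0 !mxE.
- by move/matrixP: H => /(_ o1 0); rewrite A1 !mxE.
- by move/matrixP: H => /(_ o2 0); rewrite A2 !mxE.
Qed.

Theorem theorem10 (R : realType) (lam h : R) :
  0 < h -> lam * h + 2 != 0 ->
  let psi := expR (lam * h) * (2 - lam * h) / (lam * h + 2) in
  let phi := h * (expR (lam * h) + 1) / (lam * h + 2) in
  let theta := (expR (lam * h) + 1)^-1 in
  exact_scheme h (J6 lam) (theta_scheme psi phi theta (J6 lam)).
Proof.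
move=> hpos hne psi phi theta x0 x sol x00 xs xs0 stp.
have SF := @sol_formula R lam x sol.
set e := expR (lam * h).
have ep : 0 < e by exact: expR_gt0.
have e1 : e + 1 != 0 by rewrite gt_eqF // ltr_wpDr // ?ler01 // ltW.
have h0 : h != 0 by rewrite gt_eqF.
pose c := phi^-1 - lam * theta.
have cE : c = 2 / (h * (e + 1)) by rewrite /c /phi /theta -/e; field; rewrite e1 h0 hne.
have cnz : c != 0 by rewrite cE mulf_neq0 // ?invr_eq0 ?mulf_neq0 // pnatr_eq0.
have K0 : phi^-1 * psi + lam * (1 - theta) - e * c = 0.
  by rewrite cE /phi /psi /theta -/e; field; rewrite ?e1 ?h0 ?hne.
have K1 : theta * e + (1 - theta) - e * h * c = 0.
  by rewrite cE /theta -/e; field; rewrite ?e1 ?h0 ?hne.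
have K2 : theta * e * h - e * (h * h) / 2 * c = 0.
  by rewrite cE /theta -/e; field; rewrite ?e1 ?h0 ?hne.
elim => [|k IH]; first by rewrite mul0r xs0 x00.
have -> : k.+1%:R * h = k%:R * h + h by rewrite -addn1 natrD mulrDl mul1r.
set s := k%:R * h.
have eS : expR (lam * (s + h)) = expR (lam * s) * e by rewrite mulrDr expRD.
have [S2 S1 S0] := SF s.
have [T2 T1 T0] := SF (s + h).
have [E0 E1 E2] := @scheme_comp R lam psi phi theta _ _ (stp k : theta_scheme psi phi theta (J6 lam) (xs k) (xs k.+1)).
rewrite IH in E0 E1 E2.
set y := xs k.+1 in E0 E1 E2 *.
set u := x s in E0 E1 E2 S0 S1 S2.
have Y2 : y o2 0 = e * u o2 0.
  apply: (mulIf cnz); apply/eqP; rewrite -subr_eq0; apply/eqP.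
  have -> : y o2 0 * c - e * u o2 0 * c =
     (phi^-1 * (y o2 0 - psi * u o2 0) - lam * (theta * y o2 0 + (1 - theta) * u o2 0))
     + u o2 0 * (phi^-1 * psi + lam * (1 - theta) - e * c) by rewrite /c; ring.
  by rewrite E2 subrr K0 mulr0 addr0.
have Y1 : y o1 0 = e * (u o1 0 + h * u o2 0).
  apply: (mulIf cnz); apply/eqP; rewrite -subr_eq0; apply/eqP.
  have -> : y o1 0 * c - e * (u o1 0 + h * u o2 0) * c =
     (phi^-1 * (y o1 0 - psi * u o1 0) - lam * (theta * y o1 0 + (1 - theta) * u o1 0)
        - (theta * y o2 0 + (1 - theta) * u o2 0))
     + u o1 0 * (phi^-1 * psi + lam * (1 - theta) - e * c)
     + u o2 0 * (theta * e + (1 - theta) - e * h * c) by rewrite Y2 /c; ring.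
  by rewrite E1 K0 K1; ring.
have Y0 : y o0 0 = e * (u o0 0 + h * u o1 0 + (h * h) / 2 * u o2 0).
  apply: (mulIf cnz); apply/eqP; rewrite -subr_eq0; apply/eqP.
  have -> : y o0 0 * c - e * (u o0 0 + h * u o1 0 + (h * h) / 2 * u o2 0) * c =
     (phi^-1 * (y o0 0 - psi * u o0 0) - lam * (theta * y o0 0 + (1 - theta) * u o0 0)
        - (theta * y o1 0 + (1 - theta) * u o1 0))
     + u o0 0 * (phi^-1 * psi + lam * (1 - theta) - e * c)
     + u o1 0 * (theta * e + (1 - theta) - e * h * c)
     + u o2 0 * (theta * e * h - e * (h * h) / 2 * c) by rewrite Y1 /c; ring.
  by rewrite E0 K0 K1 K2; ring.
apply: cV3_ext.
- by rewrite Y0 T0 S0 S1 S2 eS; field.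
- by rewrite Y1 T1 S1 S2 eS; ring.
- by rewrite Y2 T2 S2 eS; ring.
Qed.
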